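(* Let $k\ge 2$ be an integer. For any positive integer $N$, \[ \widetilde{Z}_k(N)=\sum_{\substack{c\in\mathbb{N}\\ N\mid c}} z_k(c), \qquad\text{where}\qquad z_k(c):=\sum_{\substack{r\in\mathbb{N}\\ r\ge c}}\ \sum_{d\in\mathbb{N}}\mu(d)\,\mu_{k+1}(dr)\prod_{p\mid dr}\frac{1}{(p^k-1)^2}. \]
   Context: $\mu$ is the Möbius function, $\mu_{k+1}(q)$ is the indicator function of the $(k+1)$-free positive integers, and $p$ always denotes a prime. For $N\in\mathbb{N}$, \[ \widetilde{Z}_k(N):=\sum_{q\in\mathbb{N}}\mu_{k+1}(q)\Bigl(\prod_{p\mid q}\frac{1}{(p^k-1)^2}\Bigr)\#\{m\in\mathbb{N}\cap[1,q/N]:\gcd(m,q)=1\}. \] *)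

(* Defs.v *)
From HB Require Import structures.
From mathcomp Require Import all_boot all_order all_algebra.
From mathcomp Require Import all_classical all_reals.
From mathcomp Require Import topology normedtype sequences.
Set Implicit Arguments. Unset Strict Implicit. Unset Printing Implicit Defensive.
Import Order.TTheory GRing.Theory Num.Theory numFieldNormedType.Exports.
Local Open Scope ring_scope.

Definition squarefreeb (n : nat) : bool :=
  (0 < n)%N && all (fun p => logn p n == 1)%N (primes n).

(* Moebius function (mu(0) := 0, irrelevant since only positive arguments are used). *)
Definition moebius (R : nzRingType) (n : nat) : R :=
  if squarefreeb n then (-1) ^+ size (primes n) else 0.

(* mu_{k+1}: indicator of the (k+1)-free positive integers. *)
Definition kfree_ind (R : nzRingType) (k n : nat) : R :=
  if (0 < n)%N && all (fun p => logn p n <= k)%N (primes n) then 1 else 0.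

Definition wprod (R : fieldType) (k q : nat) : R :=
  \prod_(p <- primes q) ((((p ^ k - 1)%N)%:R) ^+ 2)^-1.

Definition ncop (N q : nat) : nat :=
  count (fun m => coprime m q) (iota 1 (q %/ N)).

Definition Ztilde (R : realType) (k N : nat) : R :=
  \big[+%R/0%R]_(0 <= q <oo) (kfree_ind R k q.+1 * wprod R k q.+1 * (ncop N q.+1)%:R).

Definition zk (R : realType) (k c : nat) : R :=
  \big[+%R/0%R]_(0 <= r <oo)
     (if (c <= r.+1)%N then
        \big[+%R/0%R]_(0 <= d <oo)
           (moebius R d.+1 * kfree_ind R k (d.+1 * r.+1) * wprod R k (d.+1 * r.+1))
      else 0).

(* Main.v *)
Require Import Defs.
From HB Require Import structures.
From mathcomp Require Import all_boot all_order all_algebra.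
From mathcomp Require Import all_classical all_reals.
From mathcomp Require Import topology normedtype sequences.
From mathcomp Require Import ereal esum exp zify ring lra.
Import Order.TTheory GRing.Theory Num.Theory numFieldNormedType.Exports.
Set Implicit Arguments. Unset Strict Implicit. Unset Printing Implicit Defensive.



Lemma divisorsM m n : (0 < m)%N -> (0 < n)%N -> coprime m n ->
  perm_eq (divisors (m * n)) [seq (a * b)%N | a <- divisors m, b <- divisors n].
Proof.
move=> m0 n0 cmn; have mn0 : (0 < m * n)%N by rewrite muln_gt0 m0.
apply: uniq_perm; first exact: divisors_uniq.
  apply: allpairs_uniq; try exact: divisors_uniq.
  move=> [a1 b1] [a2 b2] /allpairsP[[x1 y1] /= [ha1 hb1 [-> ->]]].
  move=> /allpairsP[[x2 y2] /= [ha2 hb2 [-> ->]]] /= E.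
  rewrite -!dvdn_divisors // in ha1 hb1 ha2 hb2.
  have cb1 : coprime m y1 by apply: coprime_dvdr hb1 cmn.
  have cb2 : coprime m y2 by apply: coprime_dvdr hb2 cmn.
  have ca1 : coprime n x1 by rewrite coprime_sym; apply: coprime_dvdl ha1 cmn.
  have ca2 : coprime n x2 by rewrite coprime_sym; apply: coprime_dvdl ha2 cmn.
  have E' : (x1 * y1 = x2 * y2)%N by [].
  have e1 : x1 = x2.
    by rewrite -(gcdn_idPr ha1) -(gcdn_idPr ha2) -(Gauss_gcdl x1 cb1) -(Gauss_gcdl x2 cb2) E'.
  have e2 : y1 = y2.
    by rewrite -(gcdn_idPr hb1) -(gcdn_idPr hb2) -(Gauss_gcdr y1 ca1) -(Gauss_gcdr y2 ca2) E'.
  by rewrite e1 e2.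
move=> d; rewrite -dvdn_divisors //; apply/idP/allpairsP.
  move=> dmn; exists (gcdn d m, gcdn d n) => /=.
  rewrite -!dvdn_divisors // dvdn_gcdr dvdn_gcdr; split => //.
  apply/eqP; rewrite eqn_dvd; apply/andP; split.
    by rewrite muln_gcdl [(m * _)%N]muln_gcdr !dvdn_gcd dvdn_mulr //= dvdn_mull //=.
  rewrite Gauss_dvd ?dvdn_gcdl //.
  by apply: (coprime_dvdl (dvdn_gcdr d m)); apply: (coprime_dvdr (dvdn_gcdr d n)).
move=> [[a b] /= [ha hb ->]]; rewrite -!dvdn_divisors // in ha hb.
exact: dvdn_mul.
Qed.

Lemma big_divisorsM (T : nmodType) m n (F : nat -> T) :
  (0 < m)%N -> (0 < n)%N -> coprime m n ->
  (\sum_(d <- divisors (m * n)) F d =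
  \sum_(a <- divisors m) \sum_(b <- divisors n) F (a * b)%N)%R.
Proof.
move=> m0 n0 c; rewrite (perm_big _ (divisorsM m0 n0 c)).
by rewrite big_allpairs_dep.
Qed.

Lemma divisors_pfactor p e : prime p ->
  perm_eq (divisors (p ^ e)) [seq p ^ i | i <- iota 0 e.+1].
Proof.
move=> pp; have p1 := prime_gt1 pp.
apply: uniq_perm; first exact: divisors_uniq.
  by rewrite map_inj_uniq ?iota_uniq //; apply: expnI.
move=> d; rewrite -dvdn_divisors ?expn_gt0 ?prime_gt0 //.
apply/dvdn_pfactor/mapP => // -[i]; last by rewrite mem_iota => /andP[_ hi] ->; exists i.
by move=> hi ->; exists i => //; rewrite mem_iota.
Qed.

Lemma big_divisors_pfactor (T : nmodType) p e (F : nat -> T) : prime p ->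
  (\sum_(d <- divisors (p ^ e)) F d = \sum_(0 <= i < e.+1) F (p ^ i)%N)%R.
Proof.
by move=> pp; rewrite (perm_big _ (divisors_pfactor e pp)) big_map.
Qed.

Lemma primes_mulpe a p i : (0 < a)%N -> prime p -> coprime p a -> (0 < i)%N ->
  perm_eq (primes (a * p ^ i)) (p :: primes a).
Proof.
move=> a0 pp cpa i0.
apply: uniq_perm; first exact: primes_uniq.
  rewrite /= primes_uniq andbT mem_primes pp a0 /=.
  by rewrite -prime_coprime.
move=> q; rewrite primesM ?expn_gt0 ?(prime_gt0 pp) // (primesX p i0) (primes_prime pp).
by rewrite !inE orbC.
Qed.

Lemma logn_mulpe a p i q : (0 < a)%N -> prime p -> coprime p a ->
  logn q (a * p ^ i) = (logn q a + (if q == p then i else 0))%N.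
Proof.
move=> a0 pp cpa; rewrite lognM ?expn_gt0 ?(prime_gt0 pp) // lognX (logn_prime q pp).
by case: eqP; rewrite ?muln1 ?muln0.
Qed.

Lemma pfactor_ind (P : nat -> Prop) : P 1%N ->
  (forall m p i, (0 < m)%N -> prime p -> coprime p m -> (0 < i)%N -> P m -> P (m * p ^ i)%N) ->
  forall n, (0 < n)%N -> P n.
Proof.
move=> P1 Ps n; elim: n {-2}n (leqnn n) => [|N IH] n lenN n0.
  by move: n0; rewrite lt0n; move: lenN; rewrite leqn0 => ->.
case: (ltngtP n 1) => [|n1|->//]; first by rewrite ltnS leqn0 => /eqP n00; rewrite n00 in n0.
have pp := pdiv_prime n1; set p := pdiv n in pp *.
have [m cpm def] := pfactor_coprime pp n0.
have lg : (0 < logn p n)%N by rewrite logn_gt0 mem_primes pp n0 pdiv_dvd.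
have m0 : (0 < m)%N by move: n0; rewrite def muln_gt0 => /andP[].
rewrite def; apply: Ps => //; apply: IH => //.
have : (m < n)%N.
  rewrite [X in (_ < X)%N]def -{1}(muln1 m) ltn_mul2l m0 /=.
  by rewrite -(expn0 p) ltn_exp2l ?prime_gt1.
by move=> mn; rewrite -ltnS (leq_trans mn).
Qed.

Section Steps.
Variables (a p i : nat).
Hypotheses (a0 : (0 < a)%N) (pp : prime p) (cpa : coprime p a) (i0 : (0 < i)%N).

Let pna : p \notin primes a.
Proof. by rewrite mem_primes pp a0 /= -prime_coprime. Qed.

Lemma all_step (P : nat -> nat -> bool) :
  all (fun q => P q (logn q (a * p ^ i))) (primes (a * p ^ i)) =
  P p i && all (fun q => P q (logn q a)) (primes a).
Proof.
rewrite (perm_all _ (primes_mulpe a0 pp cpa i0)) /=.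
rewrite logn_mulpe // eqxx (logn_coprime cpa) add0n; congr (_ && _).
apply: eq_in_all => q qa; rewrite logn_mulpe //.
have qp : (q == p) = false by apply/eqP => e; move: pna; rewrite -e qa.
by rewrite qp addn0.
Qed.

Lemma prod_step (R : comPzSemiRingType) (F : nat -> R) :
  (\prod_(q <- primes (a * p ^ i)) F q = F p * \prod_(q <- primes a) F q)%R.
Proof. by rewrite (perm_big _ (primes_mulpe a0 pp cpa i0)) big_cons. Qed.

Lemma size_step : size (primes (a * p ^ i)) = (size (primes a)).+1.
Proof. by rewrite (perm_size (primes_mulpe a0 pp cpa i0)). Qed.

Let n0 : (0 < a * p ^ i)%N.
Proof. by rewrite muln_gt0 a0 expn_gt0 prime_gt0. Qed.

Lemma sqf_step : squarefreeb (a * p ^ i) = (i == 1%N) && squarefreeb a.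
Proof.
rewrite /squarefreeb n0 a0 /=.
exact: (all_step (fun _ e => e == 1%N)).
Qed.

Lemma moebius_step (R : nzRingType) :
  moebius R (a * p ^ i) = (if i == 1%N then - moebius R a else 0)%R.
Proof.
rewrite /moebius sqf_step size_step; case: eqP => _ //=.
by case: squarefreeb; rewrite ?oppr0 // exprS mulN1r.
Qed.

Lemma kfree_step (R : nzRingType) k :
  kfree_ind R k (a * p ^ i) = (if (i <= k)%N then kfree_ind R k a else 0)%R.
Proof.
rewrite /kfree_ind n0 a0 /=.
rewrite (all_step (fun _ e => e <= k)%N).
by case: (i <= k)%N.
Qed.

Lemma wprod_step (R : fieldType) k :
  wprod R k (a * p ^ i) = ((((p ^ k - 1)%N)%:R ^+ 2)^-1 * wprod R k a)%R.
Proof. by rewrite /wprod prod_step. Qed.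

End Steps.

Lemma moebius1 (R : nzRingType) : moebius R 1 = 1%R.
Proof. by rewrite /moebius /squarefreeb /= expr0. Qed.

Lemma divisors1 : divisors 1 = [:: 1%N].
Proof. by []. Qed.

Lemma moebius_sum (R : nzRingType) n : (0 < n)%N ->
  (\sum_(d <- divisors n) moebius R d = (n == 1%N)%:R)%R.
Proof.
move: n; apply: pfactor_ind => [|m p i m0 pp cpm i0 _]; first by rewrite divisors1 big_seq1 moebius1.
have pi0 : (0 < p ^ i)%N by rewrite expn_gt0 prime_gt0.
rewrite big_divisorsM //; last by rewrite coprime_sym coprimeXl.
have -> : (m * p ^ i == 1)%N = false.
  apply/negbTE; rewrite muln_eq1 negb_and; apply/orP; right.
  by rewrite -(expn0 p) eqn_exp2l ?prime_gt1 // -lt0n.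
rewrite big_seq big1 // => d; rewrite -dvdn_divisors // => dm.
have d0 : (0 < d)%N by apply: dvdn_gt0 dm.
have cpd : coprime p d by apply: coprime_dvdr dm cpm.
rewrite big_divisors_pfactor // big_nat_recl // expn0 muln1.
clear pi0; case: i i0 => // i _.
rewrite big_nat_recl // moebius_step // eqxx.
rewrite big_nat big1 ?addr0 ?addrN // => j /andP[j0 _].
by rewrite moebius_step //.
Qed.

Lemma count_dvd_iota d M : (0 < d)%N -> count (fun m => d %| m)%N (iota 1 M) = (M %/ d)%N.
Proof.
move=> d0; elim: M => [|M IH]; first by rewrite div0n.
by rewrite -[M.+1]addn1 iotaD count_cat IH /= add1n addn0 addn1 (divnS _ d0) addnC.
Qed.

Lemma divisors_gcd m q : (0 < q)%N ->
  perm_eq (divisors (gcdn m q)) [seq d <- divisors q | (d %| m)%N].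
Proof.
move=> q0; have g0 : (0 < gcdn m q)%N by rewrite gcdn_gt0 q0 orbT.
apply: uniq_perm; [exact: divisors_uniq| by rewrite filter_uniq ?divisors_uniq|].
by move=> d; rewrite mem_filter -!dvdn_divisors // dvdn_gcd andbC.
Qed.

Lemma ncopE (R : nzRingType) N q : (0 < q)%N ->
  ((ncop N q)%:R = \sum_(d <- divisors q) moebius R d * ((q %/ d) %/ N)%:R)%R.
Proof.
move=> q0; rewrite /ncop -sum1_count natr_sum big_mkcond /=.
under eq_bigr => m _.
  have -> : ((if coprime m q then (1%N)%:R else 0) = (gcdn m q == 1%N)%:R :> R)%R.
    by rewrite /coprime; case: eqP.
  rewrite -moebius_sum ?gcdn_gt0 ?q0 ?orbT // (perm_big _ (divisors_gcd m q0)).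
  rewrite big_filter big_mkcond /=.
  over.
rewrite exchange_big /=; apply: eq_big_seq => d; rewrite -dvdn_divisors // => dq.
have d0 : (0 < d)%N by apply: dvdn_gt0 dq.
rewrite -big_mkcond /= big_const_seq.
rewrite divnAC -(count_dvd_iota _ d0).
elim: count => [|c IH] /=; first by rewrite mulr0.
by rewrite IH -natr1 mulrDr mulr1 addrC.
Qed.

Definition mp (R : nzRingType) d : R :=
  if squarefreeb d && ~~ odd (size (primes d)) then 1%R else 0%R.
Definition mn (R : nzRingType) d : R :=
  if squarefreeb d && odd (size (primes d)) then 1%R else 0%R.

Lemma moebius_pn (R : nzRingType) d : moebius R d = (mp R d - mn R d)%R.
Proof.
rewrite /moebius /mp /mn; case: squarefreeb => /=; last by rewrite subr0.
by rewrite -signr_odd; case: odd; rewrite /= ?expr1 ?expr0 ?subr0 ?sub0r.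
Qed.

Section Euler.
Variable R : realFieldType.
Variables (h : nat -> R) (g : nat -> nat -> R) (K : nat).
Hypotheses (h0 : forall n, (0 <= h n)%R) (h1 : h 1%N = 1%R)
  (g0 : forall p e, (0 <= g p e)%R) (gK : forall p e, (K <= e)%N -> g p e = 0%R)
  (K0 : (0 < K)%N)
  (hstep : forall m p i, (0 < m)%N -> prime p -> coprime p m -> (0 < i)%N ->
     h (m * p ^ i)%N = (g p i * h m)%R).

Definition g' p e : R := if e == 0%N then 1%R else g p e.

Lemma g'0 p e : (0 <= g' p e)%R.
Proof. by rewrite /g'; case: eqP. Qed.

Definition Eul (P : seq nat) : R := (\prod_(p <- P) \sum_(0 <= e < K) g' p e)%R.

Lemma cop_part n p : (0 < n)%N -> prime p ->
  [/\ (0 < n %/ p ^ logn p n)%N, coprime p (n %/ p ^ logn p n) &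
      n = (n %/ p ^ logn p n * p ^ logn p n)%N].
Proof.
move=> n0 pp; have [m cpm def] := pfactor_coprime pp n0.
have -> : (n %/ p ^ logn p n)%N = m by rewrite {1}def mulnK // expn_gt0 prime_gt0.
split => //; move: n0; rewrite def muln_gt0 => /andP[] //.
Qed.

Lemma hdecomp n p : (0 < n)%N -> prime p ->
  h n = (g' p (logn p n) * h (n %/ p ^ logn p n))%R.
Proof.
move=> n0 pp; have [m0 cpm def] := cop_part n0 pp.
rewrite /g'; case: eqP => [->|e0]; first by rewrite expn0 divn1 mul1r.
by rewrite {1}def hstep // lt0n; apply/eqP.
Qed.

Lemma one_of_primes n : (0 < n)%N -> primes n = [::] -> n = 1%N.
Proof.
move=> n0 pn; case: (ltngtP n 1) => // [|n1].
  by rewrite ltnS leqn0 => /eqP n00; rewrite n00 in n0.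
have : pdiv n \in primes n by rewrite mem_primes pdiv_prime // n0 pdiv_dvd.
by rewrite pn.
Qed.

Lemma euler (P : seq nat) : uniq P -> all prime P -> forall s : seq nat, uniq s ->
  (forall n, n \in s -> (0 < n)%N /\ {subset primes n <= P}) ->
  (\sum_(n <- s) h n <= Eul P)%R.
Proof.
elim: P => [|p P IH] uP aP s us hs.
  have s1 : forall n, n \in s -> n = 1%N.
    move=> n /hs [n0 sub]; apply: one_of_primes => //.
    by case: (primes n) sub => // q l /(_ q); rewrite inE eqxx => /(_ isT).
  rewrite /Eul big_nil.
  case: s us s1 {hs} => [|x [|y s']]; rewrite ?big_nil ?big_seq1 //.
    by move=> _ /(_ x); rewrite inE eqxx => /(_ isT) ->; rewrite h1.
  move=> /= /andP[]; rewrite inE negb_or => /andP[/eqP xy _] _ s1.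
  by exfalso; apply: xy; rewrite (s1 x) ?inE ?eqxx // (s1 y) ?inE ?eqxx ?orbT.
move: uP aP => /= /andP[pP uP] /andP[pp aP].
have E1 : (\sum_(n <- s) h n =
    \sum_(n <- s) \sum_(0 <= e < K | e == logn p n) h n)%R.
  rewrite big_seq [RHS]big_seq; apply: eq_bigr => n ns; rewrite big_nat1_eq /=.
  case: ifP => // Kl; rewrite (hdecomp (proj1 (hs n ns)) pp) /g'.
  have -> : (logn p n == 0%N) = false by apply/negbTE; rewrite -lt0n (leq_trans K0) // leqNgt Kl.
  by rewrite gK ?mul0r // leqNgt Kl.
rewrite E1 {E1}.
under eq_bigr do rewrite big_mkcond /=.
rewrite exchange_big /= /Eul big_cons mulr_suml.
apply: ler_sum => e _.
rewrite -big_mkcond /=.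
set s' := [seq n %/ p ^ e | n <- [seq n <- s | e == logn p n]]%N.
have -> : (\sum_(n <- s | e == logn p n) h n = g' p e * \sum_(m <- s') h m)%R.
  rewrite big_map big_filter mulr_sumr big_seq_cond [RHS]big_seq_cond.
  apply: eq_bigr => n /andP[ns /eqP ->].
  exact: (hdecomp (proj1 (hs n ns)) pp).
apply: ler_wpM2l; first exact: g'0.
apply: IH => //.
  rewrite map_inj_in_uniq ?filter_uniq // => n1 n2.
  rewrite !mem_filter => /andP[/eqP e1 n1s] /andP[/eqP e2 n2s] E.
  have [_ _ d1] := cop_part (proj1 (hs n1 n1s)) pp.
  have [_ _ d2] := cop_part (proj1 (hs n2 n2s)) pp.
  by rewrite d1 d2 -e1 -e2 E.
move=> m /mapP[n]; rewrite mem_filter => /andP[/eqP en ns] ->.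
have [n0 sub] := hs n ns.
have [m0 cpm d] := cop_part n0 pp.
rewrite en; split => // q qm.
have : q \in p :: P.
  apply: sub; move: qm; rewrite !mem_primes n0 => /and3P[-> _ qd] /=.
  by rewrite [X in (_ %| X)%N]d dvdn_mulr.
rewrite inE => /orP[/eqP qp|] //.
move: qm; rewrite qp mem_primes => /and3P[_ _ pd].
by move: cpm; rewrite prime_coprime // pd.
Qed.

End Euler.

Definition wp (R : fieldType) k p : R := ((((p ^ k - 1)%N)%:R ^+ 2)^-1)%R.
Definition af (R : fieldType) k n : R := (kfree_ind R k n * wprod R k n)%R.
Definition sigR (R : fieldType) n : R := (\sum_(d <- divisors n) d%:R)%R.
Definition hh (R : fieldType) k n : R := (af R k n * sigR R n)%R.
Definition gg (R : fieldType) k p e : R :=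
  if (e <= k)%N then (wp R k p * sigR R (p ^ e))%R else 0%R.
Definition Pl M := [seq (n.+2)%N | n <- iota 0 M & prime n.+2].

Section Bound.
Variables (R : realType) (k : nat).
Hypothesis hk : (2 <= k)%N.
Local Open Scope ring_scope.

Lemma sigR_mul m p i : (0 < m)%N -> prime p -> coprime p m -> (0 < i)%N ->
  sigR R (m * p ^ i) = sigR R m * sigR R (p ^ i).
Proof.
move=> m0 pp cpm i0; rewrite /sigR big_divisorsM ?expn_gt0 ?(prime_gt0 pp) //; last first.
  by rewrite coprime_sym coprimeXl.
rewrite [RHS]big_distrlr /=; apply: eq_bigr => a _; apply: eq_bigr => b _.
by rewrite natrM.
Qed.

Lemma hh_step m p i : (0 < m)%N -> prime p -> coprime p m -> (0 < i)%N ->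
  hh R k (m * p ^ i) = gg R k p i * hh R k m.
Proof.
move=> m0 pp cpm i0; rewrite /hh /af kfree_step // wprod_step // sigR_mul // /gg /wp.
by case: (i <= k)%N; ring.
Qed.

Lemma hh1 : hh R k 1 = 1.
Proof. by rewrite /hh /af /kfree_ind /wprod /sigR /= big_nil big_seq1 !mul1r. Qed.

Lemma wp_ge0 p : 0 <= wp R k p.
Proof. by rewrite /wp invr_ge0 exprn_ge0 ?ler0n. Qed.

Lemma sigR_ge0 n : 0 <= sigR R n.
Proof. by rewrite /sigR sumr_ge0 // => d _; rewrite ler0n. Qed.

Lemma kfree_ge0 n : 0 <= kfree_ind R k n.
Proof. by rewrite /kfree_ind; case: ifP. Qed.

Lemma wprod_ge0 n : 0 <= wprod R k n.
Proof.
by rewrite /wprod prodr_ge0 // => p _; rewrite invr_ge0 exprn_ge0 ?ler0n.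
Qed.

Lemma af_ge0 n : 0 <= af R k n.
Proof. by rewrite /af mulr_ge0 ?kfree_ge0 ?wprod_ge0. Qed.

Lemma hh_ge0 n : 0 <= hh R k n.
Proof. by rewrite /hh mulr_ge0 ?af_ge0 ?sigR_ge0. Qed.

Lemma gg_ge0 p e : 0 <= gg R k p e.
Proof. by rewrite /gg; case: ifP => // _; rewrite mulr_ge0 ?wp_ge0 ?sigR_ge0. Qed.

Lemma hh_partial M :
  \sum_(0 <= q < M) hh R k q.+1 <= Eul (gg R k) k.+1 (Pl M).
Proof.
have -> : \sum_(0 <= q < M) hh R k q.+1 = \sum_(n <- map S (iota 0 M)) hh R k n.
  by rewrite big_map /index_iota subn0.
apply: euler.
- exact: hh1.
- exact: gg_ge0.
- by move=> p e ke; rewrite /gg leqNgt ke.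
- by [].
- exact: hh_step.
- by rewrite /Pl map_inj_uniq ?filter_uniq ?iota_uniq // => x y [].
- by rewrite /Pl all_map; apply/allP => x; rewrite mem_filter => /andP[].
- by rewrite map_inj_uniq ?iota_uniq //; apply: succn_inj.
move=> n /mapP[q]; rewrite mem_iota add0n => /andP[_ qM] ->; split => // r.
rewrite mem_primes => /and3P[rp _ rd]; rewrite /Pl.
have r2 : (2 <= r)%N by apply: prime_gt1.
apply/mapP; exists (r - 2)%N; last by rewrite -addn2 subnK.
rewrite mem_filter -addn2 subnK // rp /= mem_iota add0n.
have := dvdn_leq (ltn0Sn q) rd; lia.
Qed.

Lemma sigR_pow_le p j : prime p -> (j <= k)%N ->
  sigR R (p ^ j) <= ((k.+1 * p ^ k)%N)%:R.
Proof.
move=> pp jk; rewrite /sigR big_divisors_pfactor // -natr_sum ler_nat.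
apply: (@leq_trans (\sum_(0 <= i < j.+1) p ^ k)%N).
  rewrite big_nat [X in (_ <= X)%N]big_nat; apply: leq_sum => i /andP[_ ij].
  by rewrite leq_pexp2l ?prime_gt0 // (leq_trans _ jk) // -ltnS.
by rewrite sum_nat_const_nat subn0 leq_mul2r ltnS jk orbT.
Qed.

Lemma wp_pk_le p : prime p -> wp R k p * ((p ^ k)%N)%:R <= 4 / (p%:R ^+ 2).
Proof.
move=> pp; have p2 := prime_gt1 pp.
have xk : (4 <= p ^ k)%N.
  apply: (@leq_trans (p ^ 2)); first by rewrite (@leq_exp2r 2 p 2).
  by rewrite leq_pexp2l // ltnW.
have h2 : (p ^ 2 <= p ^ k)%N by rewrite leq_pexp2l // ltnW.
have key : (p ^ k * p ^ 2 <= 4 * ((p ^ k - 1) * (p ^ k - 1)))%N by nia.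
have D0 : 0 < ((p ^ k - 1)%N)%:R ^+ 2 :> R.
  by rewrite exprn_gt0 // ltr0n subn_gt0 (leq_trans _ xk).
have Q0 : 0 < p%:R ^+ 2 :> R by rewrite exprn_gt0 // ltr0n prime_gt0.
rewrite /wp mulrC ler_pdivrMr // mulrAC ler_pdivlMr //.
rewrite -!natrX -[4]/(4%N%:R) -!natrM ler_nat.
by rewrite (expnS _ 1) expn1.
Qed.

Lemma factor_le p : prime p ->
  \sum_(0 <= e < k.+1) g' (gg R k) p e <= 1 + ((4 * k * k.+1)%N)%:R / (p%:R ^+ 2).
Proof.
move=> pp; rewrite big_nat_recl // /g' eqxx lerD2l.
under eq_bigr do rewrite /=.
apply: (@le_trans _ _ (\sum_(0 <= e < k) (((k.+1)%N)%:R * (4 / (p%:R ^+ 2))))).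
  rewrite big_nat [X in _ <= X]big_nat; apply: ler_sum => e /andP[_ ek].
  rewrite /gg ek.
  apply: (@le_trans _ _ (wp R k p * ((k.+1 * p ^ k)%N)%:R)).
    by apply: ler_wpM2l; [exact: wp_ge0| exact: sigR_pow_le].
  rewrite natrM mulrCA ler_wpM2l ?ler0n //.
  exact: wp_pk_le.
rewrite sumr_const_nat subn0 -mulr_natr !natrM; rewrite le_eqVlt; apply/orP; left; apply/eqP.
ring.
Qed.

Lemma sum_inv_sq M : \sum_(0 <= n < M) ((n.+2)%:R ^+ 2)^-1 <= 1 :> R.
Proof.
apply: (@le_trans _ _ (\sum_(0 <= n < M) (- ((n.+2)%:R)^-1 - - ((n.+1)%:R)^-1))).
  rewrite big_nat [X in _ <= X]big_nat; apply: ler_sum => n _.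
  rewrite opprK addrC.
  have e : ((n.+1)%:R)^-1 - ((n.+2)%:R)^-1 = (((n.+1 * n.+2)%N)%:R)^-1 :> R.
    rewrite natrM -[(n.+2)%:R]natr1.
    have x0 : (n.+1)%:R != 0 :> R by rewrite pnatr_eq0.
    have x1 : (n.+1)%:R + 1 != 0 :> R by rewrite natr1 pnatr_eq0.
    move: (n.+1%:R) x0 x1 => x x0 x1; by field; rewrite x0 x1.
  rewrite e -natrX ler_pV2 ?inE ?unitfE ?ltr0n ?pnatr_eq0 ?muln_gt0 ?expn_gt0 //.
  by rewrite ler_nat expnS expn1 leq_mul2r leqnSn orbT.
rewrite (telescope_sumr (fun n => - ((n.+1)%:R)^-1)) // opprK.
have h : 0 <= (M.+1%:R : R)^-1 by rewrite invr_ge0 ler0n.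
rewrite invr1; move: (M.+1%:R^-1) h => y h; lra.
Qed.

Lemma Eul_bound M : Eul (gg R k) k.+1 (Pl M) <= expR (((4 * k * k.+1)%N)%:R).
Proof.
set C := ((4 * k * k.+1)%N)%:R : R.
rewrite /Eul /Pl big_map big_filter.
apply: (@le_trans _ _ (\prod_(n <- iota 0 M | prime n.+2) expR (C / ((n.+2)%:R ^+ 2)))).
  apply: ler_prod => n pn; apply/andP; split.
    by apply: sumr_ge0 => e _; apply: g'0 => *; exact: gg_ge0.
  by apply: (le_trans (factor_le pn)); exact: expR_ge1Dx.
rewrite -expR_sum ler_expR.
apply: (@le_trans _ _ (\sum_(n <- iota 0 M) C / ((n.+2)%:R ^+ 2))).
  rewrite big_mkcond; apply: ler_sum => n _.
  by case: ifP => // _; rewrite mulr_ge0 ?invr_ge0 ?exprn_ge0 ?ler0n.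
rewrite -mulr_sumr -[X in _ <= X]mulr1 ler_wpM2l ?ler0n //.
by have := sum_inv_sq M; rewrite /index_iota subn0.
Qed.

Lemma hh_bounded M :
  \sum_(0 <= q < M) hh R k q.+1 <= expR (((4 * k * k.+1)%N)%:R).
Proof. exact: le_trans (hh_partial M) (Eul_bound M). Qed.

End Bound.

Local Open Scope classical_set_scope.
Local Open Scope ring_scope.

Section Gen.
Variable R : realType.
Local Open Scope ereal_scope.

Lemma nneseries_trunc (f : nat -> \bar R) (P : pred nat) n :
  (forall i, P i -> 0 <= f i) -> (forall i, (n <= i)%N -> P i -> f i = 0) ->
  \sum_(i <oo | P i) f i = \sum_(0 <= i < n | P i) f i.
Proof.
move=> f0 fn; rewrite (@nneseries_split_cond R f 0 n P) // add0n eseries0 ?adde0 //.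
Qed.

Lemma nneseries_single (f : nat -> \bar R) r :
  (forall i, 0 <= f i) -> f r <= \sum_(i <oo) f i.
Proof.
move=> f0; apply: le_trans (nneseries_lim_ge r.+1 _); last by move=> *; exact: f0.
rewrite big_nat_recr //= leeDr //; exact: sume_ge0.
Qed.

Lemma bridge (u : nat -> R) : (forall i, (0 <= u i)%R) ->
  \sum_(i <oo) (u i)%:E < +oo ->
  cvgn (fun n => (\sum_(0 <= i < n) u i)%R) /\
  (limn (fun n => (\sum_(0 <= i < n) u i)%R))%:E = \sum_(i <oo) (u i)%:E.
Proof.
move=> u0 fin; have cv := nnseries_is_cvg u0 fin; split => //.
rewrite -EFin_lim //; apply/congr_lim/funext => n /=.
by rewrite sumEFin.
Qed.

Lemma bridgeB (u v : nat -> R) : (forall i, (0 <= u i)%R) -> (forall i, (0 <= v i)%R) ->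
  \sum_(i <oo) (u i)%:E < +oo -> \sum_(i <oo) (v i)%:E < +oo ->
  limn (fun n => (\sum_(0 <= i < n) (u i - v i))%R) =
  (limn (fun n => (\sum_(0 <= i < n) u i)%R) - limn (fun n => (\sum_(0 <= i < n) v i)%R))%R.
Proof.
move=> u0 v0 fu fv; have [cu _] := bridge u0 fu; have [cv _] := bridge v0 fv.
have -> : (fun n => (\sum_(0 <= i < n) (u i - v i))%R) =
  (fun n => (\sum_(0 <= i < n) u i)%R - (\sum_(0 <= i < n) v i)%R)%R.
  by apply/funext => n; rewrite sumrB.
exact: limB.
Qed.

Lemma divisors_iota n : (0 < n)%N ->
  perm_eq (divisors n) [seq j.+1 | j <- iota 0 n & (j.+1 %| n)%N].
Proof.
move=> n0; apply: uniq_perm; first exact: divisors_uniq.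
  by rewrite map_inj_uniq ?filter_uniq ?iota_uniq //; apply: succn_inj.
move=> d; rewrite -dvdn_divisors //; apply/idP/mapP.
  move=> dn; have d0 : (0 < d)%N by apply: dvdn_gt0 dn.
  exists d.-1; last by rewrite prednK.
  by rewrite mem_filter prednK // dn mem_iota add0n /= (leq_trans _ (dvdn_leq n0 dn)) // prednK.
by move=> [j]; rewrite mem_filter => /andP[jn _] ->.
Qed.

Lemma sum_divisors_series (G : nat -> \bar R) n : (0 < n)%N -> (forall j, 0 <= G j) ->
  \sum_(d <- divisors n) G d = \sum_(j <oo | (j.+1 %| n)%N) G j.+1.
Proof.
move=> n0 G0; rewrite (perm_big _ (divisors_iota n0)) big_map big_filter.
rewrite (nneseries_trunc (n:=n)); first by rewrite /index_iota subn0.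
  by move=> *; exact: G0.
move=> i ni; apply: contraTeq => _.
by apply/negP => /(dvdn_leq n0); rewrite ltnNge ni.
Qed.

Lemma RI (F : nat -> nat -> \bar R) : (forall r d, 0 <= F r d) ->
  \sum_(r <oo) \sum_(d <oo) F r d =
  \sum_(q <oo) \sum_(d <- divisors q.+1) F (q.+1 %/ d).-1 d.-1.
Proof.
move=> F0.
set G := fun q j => F (q.+1 %/ j.+1).-1 j.
have G0 q j : 0 <= G q j by exact: F0.
transitivity (\sum_(q <oo) \sum_(j <oo | (j.+1 %| q.+1)%N) G q j); last first.
  apply: eq_eseriesr => q _; rewrite sum_divisors_series //.
rewrite nneseries_esumT; last by move=> r; apply: nneseries_ge0 => *.
under eq_esum do rewrite nneseries_esumT //.
rewrite esum_esum //.
rewrite [RHS]nneseries_esumT; last by move=> r; apply: nneseries_ge0 => *.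
under [RHS]eq_esum do rewrite nneseries_esum //.
rewrite [RHS]esum_esum //.
set J := fun q : nat => [set j : nat | (j.+1 %| q.+1)%N].
pose e := fun x : nat * nat => ((x.2.+1 * x.1.+1).-1, x.2).
rewrite [RHS](reindex_esum ([set: nat] `*`` (fun=> [set: nat])) (setT `*`` J) e).
  apply: eq_esum => -[r d] _.
  change (F r d = F ((d.+1 * r.+1).-1.+1 %/ d.+1).-1 d).
  by rewrite prednK ?muln_gt0 // mulKn.
split.
- move=> [r d] _; split => //.
  change (d.+1 %| (d.+1 * r.+1).-1.+1)%N.
  by rewrite prednK ?muln_gt0 // dvdn_mulr.
- move=> [r1 d1] [r2 d2] _ _ E.
  have E2 := congr1 snd E; have E1 := congr1 fst E.
  change (d1 = d2) in E2; subst d2.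
  change ((d1.+1 * r1.+1).-1 = (d1.+1 * r2.+1).-1) in E1.
  move/(congr1 S): E1; rewrite !prednK ?muln_gt0 //.
  by move/eqP; rewrite eqn_mul2l /= => /eqP [->].
- move=> [q j] [_ jq]; exists ((q.+1 %/ j.+1).-1, j) => //.
  have jq' : (j.+1 %| q.+1)%N by exact: jq.
  rewrite /e; congr (_, _).
  change ((j.+1 * (q.+1 %/ j.+1).-1.+1).-1 = q).
  have q0 : (0 < q.+1 %/ j.+1)%N by rewrite divn_gt0 // dvdn_leq.
  by rewrite (prednK q0) mulnC divnK.
Qed.

End Gen.

Section Main.
Variables (R : realType) (k N : nat).
Hypotheses (hk : (2 <= k)%N) (hN : (0 < N)%N).
Local Open Scope ereal_scope.

Definition Bt := \sum_(r <oo) \sum_(d <oo) ((af R k (d.+1 * r.+1) * (r.+1)%:R)%R)%:E.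

Lemma hh_series_fin : \sum_(q <oo) (hh R k q.+1)%:E < +oo.
Proof.
apply: (@le_lt_trans _ _ (expR (((4 * k * k.+1)%N)%:R) : R)%:E); last exact: ltry.
apply: lime_le; first by apply: is_cvg_nneseries => n _ _; rewrite lee_fin hh_ge0.
apply: nearW => n; rewrite sumEFin lee_fin.
exact: hh_bounded.
Qed.

Lemma Bt_fin : Bt < +oo.
Proof.
rewrite /Bt nneseries_interchange; last by move=> i j; rewrite lee_fin mulr_ge0 ?af_ge0.
rewrite (@RI R (fun d r => ((af R k (d.+1 * r.+1) * (r.+1)%:R)%R)%:E)); last first.
  by move=> i j; rewrite lee_fin mulr_ge0 ?af_ge0.
apply: le_lt_trans hh_series_fin; apply: lee_nneseries.
  by move=> q _ _; apply: sume_ge0 => d _; rewrite lee_fin mulr_ge0 ?af_ge0.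
move=> q _; rewrite sumEFin lee_fin le_eqVlt; apply/orP; left; apply/eqP.
rewrite /hh /sigR mulr_sumr big_seq [RHS]big_seq; apply: eq_bigr => d.
rewrite -dvdn_divisors // => dq; have d0 : (0 < d)%N by apply: dvdn_gt0 dq.
have e0 : (0 < q.+1 %/ d)%N by rewrite divn_gt0 // dvdn_leq.
by rewrite !prednK // divnK.
Qed.


Section Sign.
Variable s : nat -> R.
Hypothesis s01 : forall d, (0 <= s d <= 1)%R.

Let s0 d : (0 <= s d)%R. Proof. by case/andP: (s01 d). Qed.
Let s1 d : (s d <= 1)%R. Proof. by case/andP: (s01 d). Qed.

Definition us r d : R := (s d.+1 * af R k (d.+1 * r.+1))%R.
Definition Gs r : R := limn (fun n => (\sum_(0 <= d < n) us r d)%R).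
Definition Zs c : R := limn (fun n => (\sum_(0 <= r < n) (if (c <= r.+1)%N then Gs r else 0))%R).
Definition Ys : R := limn (fun n => (\sum_(0 <= c < n) (if (N %| c.+1)%N then Zs c.+1 else 0))%R).
Definition Ps n : R := (\sum_(d <- divisors n) s d * ((n %/ d) %/ N)%:R)%R.
Definition Ls : R := limn (fun n => (\sum_(0 <= q < n) af R k q.+1 * Ps q.+1)%R).

Lemma us_ge0 r d : (0 <= us r d)%R.
Proof. by rewrite /us mulr_ge0 ?af_ge0. Qed.

Lemma us_le r d : (us r d <= af R k (d.+1 * r.+1) * (r.+1)%:R)%R.
Proof.
rewrite /us mulrC ler_wpM2l ?af_ge0 //; apply: le_trans (s1 _) _.
by rewrite ler1n.
Qed.

Lemma Gs_fin r : \sum_(d <oo) (us r d)%:E < +oo.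
Proof.
apply: le_lt_trans Bt_fin.
have := @nneseries_single R (fun r => \sum_(d <oo) ((af R k (d.+1 * r.+1) * (r.+1)%:R)%R)%:E) r.
move=> /(_ _) H; apply: le_trans (H _); last first.
  by move=> i; apply: nneseries_ge0 => j _ _; rewrite lee_fin mulr_ge0 ?af_ge0.
apply: lee_nneseries; first by move=> i _ _; rewrite lee_fin us_ge0.
by move=> d _; rewrite lee_fin us_le.
Qed.

Lemma Gs_E r : (Gs r)%:E = \sum_(d <oo) (us r d)%:E.
Proof. by have [_ ->] := bridge (@us_ge0 r) (Gs_fin r). Qed.

Lemma Gs_ge0 r : (0 <= Gs r)%R.
Proof. by rewrite -lee_fin Gs_E; apply: nneseries_ge0 => d _ _; rewrite lee_fin us_ge0. Qed.

Lemma Zterm_E c r : ((if (c <= r.+1)%N then Gs r else 0)%R)%:E =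
  \sum_(d <oo) ((if (c <= r.+1)%N then us r d else 0)%R)%:E.
Proof.
case: ifP => _; first exact: Gs_E.
by rewrite (@eseries0 _ _ 0 xpredT).
Qed.

Lemma Zterm_ge0 c r : (0 <= (if (c <= r.+1)%N then Gs r else 0))%R.
Proof. by case: ifP => _; rewrite ?Gs_ge0. Qed.

Lemma Zs_fin c : \sum_(r <oo) ((if (c <= r.+1)%N then Gs r else 0)%R)%:E < +oo.
Proof.
apply: le_lt_trans (Bt_fin); apply: lee_nneseries.
  by move=> r _ _; rewrite lee_fin Zterm_ge0.
move=> r _; rewrite Zterm_E; apply: lee_nneseries.
  by move=> d _ _; case: ifP => _; rewrite lee_fin ?us_ge0.
move=> d _; case: ifP => _; rewrite lee_fin; [exact: us_le|by rewrite mulr_ge0 ?af_ge0].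
Qed.

Lemma Zs_E c : (Zs c)%:E =
  \sum_(r <oo) \sum_(d <oo) ((if (c <= r.+1)%N then us r d else 0)%R)%:E.
Proof.
have [_ ->] := bridge (Zterm_ge0 c) (Zs_fin c).
by apply: eq_eseriesr => r _; rewrite Zterm_E.
Qed.


Lemma count_sum (x : R) M :
  (\sum_(0 <= c < M) (if (N %| c.+1)%N then x else 0) = x * (M %/ N)%:R)%R.
Proof.
elim: M => [|M IH]; first by rewrite big_nil div0n mulr0.
rewrite big_nat_recr //= IH (divnS _ hN) natrD mulrDr addrC.
by case: (N %| M.+1)%N; rewrite ?mulr1 ?mulr0 ?add0r ?addr0.
Qed.

Lemma us_le1 r d : (us r d <= af R k (d.+1 * r.+1))%R.
Proof. by rewrite /us -[X in (_ <= X)%R]mul1r ler_wpM2r ?af_ge0. Qed.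

Definition Yterm c : R := if (N %| c.+1)%N then Zs c.+1 else 0%R.

Lemma Yterm_ge0 c : (0 <= Yterm c)%R.
Proof.
rewrite /Yterm; case: ifP => // _; rewrite -lee_fin Zs_E.
apply: nneseries_ge0 => r _ _; apply: nneseries_ge0 => d _ _.
by case: ifP; rewrite lee_fin ?us_ge0.
Qed.

Lemma Yterm_E c : (Yterm c)%:E = \sum_(r <oo) \sum_(d <oo)
  ((if (N %| c.+1)%N && (c.+1 <= r.+1)%N then us r d else 0)%R)%:E.
Proof.
rewrite /Yterm; case: ifP => _ /=; first exact: Zs_E.
rewrite (@eseries0 _ _ 0 xpredT) // => r _ _.
by rewrite (@eseries0 _ _ 0 xpredT).
Qed.

Lemma T3_E : \sum_(c <oo) \sum_(r <oo) \sum_(d <oo)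
  ((if (N %| c.+1)%N && (c.+1 <= r.+1)%N then us r d else 0)%R)%:E =
  \sum_(r <oo) \sum_(d <oo) ((us r d * (r.+1 %/ N)%:R)%R)%:E.
Proof.
rewrite nneseries_interchange; last first.
  move=> c r; apply: nneseries_ge0 => d _ _.
  by case: ifP; rewrite lee_fin ?us_ge0.
apply: eq_eseriesr => r _.
rewrite nneseries_interchange; last by move=> c d; case: ifP; rewrite lee_fin ?us_ge0.
apply: eq_eseriesr => d _.
rewrite (nneseries_trunc (n := r.+1)).
- rewrite sumEFin -count_sum; congr EFin.
  rewrite big_nat [RHS]big_nat; apply: eq_bigr => c /andP[_ cr].
  by rewrite ltnS in cr; rewrite ltnS cr andbT.
- by move=> c _; case: ifP; rewrite lee_fin ?us_ge0.
- by move=> c rc _; rewrite ltnS leqNgt rc andbF.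
Qed.

Lemma Ys_fin : \sum_(c <oo) (Yterm c)%:E < +oo.
Proof.
rewrite (eq_eseriesr (fun c _ => Yterm_E c)) T3_E.
apply: le_lt_trans Bt_fin; apply: lee_nneseries.
  by move=> r _ _; apply: nneseries_ge0 => d _ _; rewrite lee_fin mulr_ge0 ?us_ge0.
move=> r _; apply: lee_nneseries.
  by move=> d _ _; rewrite lee_fin mulr_ge0 ?us_ge0.
move=> d _; rewrite lee_fin; apply: ler_pM; rewrite ?us_ge0 ?ler0n ?us_le1 //.
by rewrite ler_nat leq_div.
Qed.

Lemma Ys_E : Ys%:E = \sum_(q <oo) ((af R k q.+1 * Ps q.+1)%R)%:E.
Proof.
have [_ ->] := bridge Yterm_ge0 Ys_fin.
rewrite (eq_eseriesr (fun c _ => Yterm_E c)) T3_E.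
rewrite (@RI R (fun r d => ((us r d * (r.+1 %/ N)%:R)%R)%:E)); last first.
  by move=> r d; rewrite lee_fin mulr_ge0 ?us_ge0.
apply: eq_eseriesr => q _; rewrite sumEFin; congr EFin.
rewrite /Ps mulr_sumr big_seq [RHS]big_seq; apply: eq_bigr => d.
rewrite -dvdn_divisors // => dq; have d0 : (0 < d)%N by apply: dvdn_gt0 dq.
have e0 : (0 < q.+1 %/ d)%N by rewrite divn_gt0 // dvdn_leq.
rewrite /us !prednK // [(d * _)%N]mulnC divnK //.
ring.
Qed.

Lemma Ls_fin : \sum_(q <oo) ((af R k q.+1 * Ps q.+1)%R)%:E < +oo.
Proof. by rewrite -Ys_E ltry. Qed.

Lemma Ps_ge0 q : (0 <= af R k q.+1 * Ps q.+1)%R.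
Proof. by rewrite mulr_ge0 ?af_ge0 // /Ps sumr_ge0 // => d _; rewrite mulr_ge0. Qed.

Lemma Ls_E : Ls%:E = Ys%:E.
Proof.
have P0 q : (0 <= af R k q.+1 * Ps q.+1)%R.
  by rewrite mulr_ge0 ?af_ge0 // /Ps sumr_ge0 // => d _; rewrite mulr_ge0.
have fin : \sum_(q <oo) ((af R k q.+1 * Ps q.+1)%R)%:E < +oo.
  by rewrite -Ys_E ltry.
by have [_ ->] := bridge P0 fin; rewrite Ys_E.
Qed.

End Sign.


Lemma limn_ext (f g : nat -> R) : f =1 g -> limn f = limn g.
Proof. by move=> /funext ->. Qed.

Lemma mp01 d : (0 <= mp R d <= 1)%R.
Proof. by rewrite /mp; case: ifP; rewrite ?lexx ?ler01. Qed.
Lemma mn01 d : (0 <= mn R d <= 1)%R.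
Proof. by rewrite /mn; case: ifP; rewrite ?lexx ?ler01. Qed.

Lemma zk_E c : zk R k c = (Zs (mp R) c - Zs (mn R) c)%R.
Proof.
rewrite /zk /Zs.
have inner r : limn (fun n => (\sum_(0 <= d < n)
    (moebius R d.+1 * kfree_ind R k (d.+1 * r.+1) * wprod R k (d.+1 * r.+1)))%R) =
    (Gs (mp R) r - Gs (mn R) r)%R.
  rewrite /Gs -bridgeB; first last.
  - apply: Gs_fin; exact: mn01.
  - apply: Gs_fin; exact: mp01.
  - apply: us_ge0; exact: mn01.
  - apply: us_ge0; exact: mp01.
  apply: limn_ext => n; apply: eq_bigr => d _.
  by rewrite /us /af moebius_pn; ring.
under eq_fun do under eq_bigr do rewrite inner.
rewrite -bridgeB; first last.
- apply: Zs_fin; exact: mn01.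
- apply: Zs_fin; exact: mp01.
- apply: Zterm_ge0; exact: mn01.
- apply: Zterm_ge0; exact: mp01.
apply: limn_ext => n; apply: eq_bigr => r _.
by case: ifP; rewrite ?subr0.
Qed.

Lemma main_eq : Ztilde R k N =
  \big[+%R/0%R]_(0 <= c <oo) (if (N %| c.+1)%N then zk R k c.+1 else 0)%R.
Proof.
have -> : \big[+%R/0%R]_(0 <= c <oo) (if (N %| c.+1)%N then zk R k c.+1 else 0)%R =
    (Ys (mp R) - Ys (mn R))%R.
  rewrite /Ys -bridgeB; first last.
  - apply: Ys_fin; exact: mn01.
  - apply: Ys_fin; exact: mp01.
  - apply: Yterm_ge0; exact: mn01.
  - apply: Yterm_ge0; exact: mp01.
  apply: limn_ext => n; apply: eq_bigr => c _.
  by rewrite /Yterm zk_E; case: ifP; rewrite ?subr0.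
have [-> ->] : Ys (mp R) = Ls (mp R) /\ Ys (mn R) = Ls (mn R).
  by split; [case: (Ls_E (mp01)) | case: (Ls_E (mn01))].
rewrite /Ztilde /Ls -bridgeB; first last.
- apply: Ls_fin; exact: mn01.
- apply: Ls_fin; exact: mp01.
- apply: Ps_ge0; exact: mn01.
- apply: Ps_ge0; exact: mp01.
apply: limn_ext => n; apply: eq_bigr => q _.
rewrite ncopE // /Ps -mulrBr -sumrB /af.
under [in RHS]eq_bigr do rewrite -mulrBl -moebius_pn.
by [].
Qed.

End Main.

Theorem lemma2p2 (R : realType) (k N : nat) (hk : (2 <= k)%N) (hN : (0 < N)%N) :
  Ztilde R k N =
  \big[+%R/0%R]_(0 <= c <oo) (if (N %| c.+1)%N then zk R k c.+1 else 0).
Proof. exact: main_eq. Qed.
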